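(* Let $f:\mathbb{R}_+^n\to\mathbb{R}$. Then $f$ is supermodular if and only if for all $x,y,z\in\mathbb{R}_+^n$ with $y\wedge z=0$ one has $f(x\vee y\vee z)+f(x)\ge f(x\vee y)+f(x\vee z)$.
   Context: For $x,y\in\mathbb{R}_+^n$, $x\vee y$ and $x\wedge y$ denote the componentwise maximum and minimum. A function $f:\mathbb{R}_+^n\to\mathbb{R}$ is supermodular if $f(x\vee y)+f(x\wedge y)\ge f(x)+f(y)$ for all $x,y\in\mathbb{R}_+^n$. *)

(* Defs.v *)
From mathcomp Require Import all_boot all_order all_algebra.
From mathcomp Require Import reals.
Set Implicit Arguments. Unset Strict Implicit. Unset Printing Implicit Defensive.
Import Order.TTheory GRing.Theory Num.Theory.
Local Open Scope ring_scope.

(* Points of R_+^n are row vectors 'rV[R]_n with nonnegative entries. *)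
Definition nonneg_vec (R : realType) (n : nat) (x : 'rV[R]_n) : Prop :=
  forall i : 'I_n, 0 <= x 0 i.

Definition vjoin (R : realType) (n : nat) (x y : 'rV[R]_n) : 'rV[R]_n :=
  \row_i Num.max (x 0 i) (y 0 i).
Definition vmeet (R : realType) (n : nat) (x y : 'rV[R]_n) : 'rV[R]_n :=
  \row_i Num.min (x 0 i) (y 0 i).

(* f : R_+^n -> R (represented on all of R^n; only values on R_+^n matter) *)
Definition supermodular (R : realType) (n : nat) (f : 'rV[R]_n -> R) : Prop :=
  forall x y : 'rV[R]_n, nonneg_vec x -> nonneg_vec y ->
    f (vjoin x y) + f (vmeet x y) >= f x + f y.

(* Main.v *)
Require Import Defs.
From mathcomp Require Import all_boot all_order all_algebra.
From mathcomp Require Import reals.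
From mathcomp Require Import lra.
Import Order.TTheory GRing.Theory Num.Theory.
Local Open Scope ring_scope.

Ltac crunch := rewrite ?maxEle ?minEle;
  repeat (match goal with
   | |- context[if ?a <= ?b then _ else _] => case: (leP a b)
   | |- context[if ?a < ?b then _ else _] => case: (ltP a b) end);
  move=> *; lra.

Theorem lemma3p4 (R : realType) (n : nat) (f : 'rV[R]_n -> R) :
  supermodular f <->
  (forall x y z : 'rV[R]_n, nonneg_vec x -> nonneg_vec y -> nonneg_vec z ->
     vmeet y z = 0 ->
     f (vjoin (vjoin x y) z) + f x >= f (vjoin x y) + f (vjoin x z)).
Proof.
split.
- move=> Hs x y z hx hy hz hyz.
  have := Hs (vjoin x y) (vjoin x z).
  have -> : vjoin (vjoin x y) (vjoin x z) = vjoin (vjoin x y) z.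
    apply/rowP => i; rewrite !mxE; crunch.
  have -> : vmeet (vjoin x y) (vjoin x z) = x.
    apply/rowP => i; rewrite !mxE.
    have := congr1 (fun m : 'rV[R]_n => m 0 i) hyz; rewrite /= !mxE.
    have := hx i; have := hy i; have := hz i.
    crunch.
  apply.
    by move=> i; rewrite mxE; have := hx i; have := hy i; crunch.
  by move=> i; rewrite mxE; have := hx i; have := hz i; crunch.
- move=> H x y hx hy.
  pose y' : 'rV[R]_n := \row_i (if y 0 i < x 0 i then x 0 i else 0).
  pose z' : 'rV[R]_n := \row_i (if x 0 i < y 0 i then y 0 i else 0).
  have := H (vmeet x y) y' z'.
  have -> : vjoin (vmeet x y) y' = x.
    apply/rowP => i; rewrite !mxE; have := hx i; have := hy i; crunch.
  have -> : vjoin (vmeet x y) z' = y.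
    apply/rowP => i; rewrite !mxE; have := hx i; have := hy i; crunch.
  have -> : vjoin x z' = vjoin x y.
    apply/rowP => i; rewrite !mxE; have := hx i; have := hy i; crunch.
  apply.
  + by move=> i; rewrite mxE; have := hx i; have := hy i; crunch.
  + by move=> i; rewrite mxE; have := hx i; have := hy i; crunch.
  + by move=> i; rewrite mxE; have := hx i; have := hy i; crunch.
  + apply/rowP => i; rewrite !mxE; have := hx i; have := hy i; crunch.
Qed.
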